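(* Let $\mathcal{S}\colon\mathbb{R}^{n\times d}\to\mathbb{R}^{n\times d}$ have $(p,\delta)$-structure. Then $\mathcal{S}$ is bijective and its inverse $\mathcal{D}:=\mathcal{S}^{-1}\colon\mathbb{R}^{n\times d}\to\mathbb{R}^{n\times d}$ has $(p',\delta^{p-1})$-structure, where $p'=p/(p-1)$.
   Context: For $q\in(1,\infty)$ and $\epsilon\ge0$ let $\varphi_{q,\epsilon}(t)=\int_0^t(\epsilon+s)^{q-2}s\,\mathrm ds$; for an N-function $\psi$ and $a\ge0$, the shifted function is $\psi_a(t)=\int_0^t\psi'(a+s)\frac{s}{a+s}\mathrm ds$. A map $\mathcal{T}\colon\mathbb{R}^{n\times d}\to\mathbb{R}^{n\times d}$ has $(q,\epsilon)$-structure if it is continuous, $\mathcal{T}(\mathbf0)=\mathbf0$, and there are constants $C_0,C_1>0$ with $(\mathcal{T}(\mathsf Q)-\mathcal{T}(\mathsf P)):(\mathsf Q-\mathsf P)\ge C_0(\varphi_{q,\epsilon})_{|\mathsf Q|}(|\mathsf Q-\mathsf P|)$ and $|\mathcal{T}(\mathsf Q)-\mathcal{T}(\mathsf P)|\le C_1(\varphi_{q,\epsilon})'_{|\mathsf Q|}(|\mathsf Q-\mathsf P|)$ for all $\mathsf P,\mathsf Q\in\mathbb{R}^{n\times d}$ with $\mathsf Q\ne\mathbf0$. Here $p\in(1,\infty)$, $\delta\ge0$. *)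

(* Defs.v *)
From HB Require Import structures.
From mathcomp Require Import all_boot all_order all_algebra.
From mathcomp Require Import all_classical all_reals all_analysis.
Set Implicit Arguments. Unset Strict Implicit. Unset Printing Implicit Defensive.
Import Order.TTheory GRing.Theory Num.Theory.
Import numFieldNormedType.Exports.
Local Open Scope classical_set_scope.
Local Open Scope ring_scope.

Section Defs.
Variable R : realType.

Definition phi_d (q eps : R) (s : R) : R := (eps + s) `^ (q - 2) * s.

Definition phi (q eps : R) (t : R) : R :=
  Rintegral lebesgue_measure `[0, t] (phi_d q eps).

(* shifted N-function, given the derivative psi' of psi:
   psi_a(t) = int_0^t psi'(a+s) s/(a+s) ds *)
Definition shifted (psi' : R -> R) (a t : R) : R :=
  Rintegral lebesgue_measure `[0, t] (fun s => psi' (a + s) * s / (a + s)).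

Definition shifted_d (psi' : R -> R) (a t : R) : R :=
  psi' (a + t) * t / (a + t).

Definition frob_dot n d (A B : 'M[R]_(n, d)) : R :=
  \sum_(i < n) \sum_(j < d) A i j * B i j.
Definition frob_norm n d (A : 'M[R]_(n, d)) : R := Num.sqrt (frob_dot A A).

Definition has_structure n d (q eps : R) (T : 'M[R]_(n, d) -> 'M[R]_(n, d)) : Prop :=
  continuous T /\ T 0 = 0 /\
  exists C0 C1 : R, 0 < C0 /\ 0 < C1 /\
    forall P Q : 'M[R]_(n, d), Q != 0 ->
      frob_dot (T Q - T P) (Q - P)
        >= C0 * shifted (phi_d q eps) (frob_norm Q) (frob_norm (Q - P)) /\
      frob_norm (T Q - T P)
        <= C1 * shifted_d (phi_d q eps) (frob_norm Q) (frob_norm (Q - P)).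
End Defs.

(* Main.v *)
Require Import Defs.
From HB Require Import structures.
From mathcomp Require Import all_boot all_order all_algebra.
From mathcomp Require Import all_classical all_reals all_analysis.
From mathcomp Require Import ring lra.
Import Order.TTheory GRing.Theory Num.Theory.
Import numFieldNormedType.Exports Num.Def.
Local Open Scope classical_set_scope.
Local Open Scope ring_scope.
Set Implicit Arguments. Unset Strict Implicit. Unset Printing Implicit Defensive.

Lemma ball_cont {K : numFieldType} (T U : pseudoMetricType K) (f : T -> U) :
  (forall x e, 0 < e -> exists2 r, 0 < r & forall y, ball x r y -> ball (f x) e (f y)) ->
  continuous f.
Proof.
move=> H x A /= /(nbhs_ballP (f x)) [e e0 eA]; apply/nbhs_ballP.
have [r r0 Hr] := H x e e0; exists r => // y /Hr /eA //.
Qed.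

Lemma cont_ball {K : numFieldType} (T U : pseudoMetricType K) (f : T -> U) x e :
  continuous f -> 0 < e -> exists2 r, 0 < r & forall y, ball x r y -> ball (f x) e (f y).
Proof.
move=> cf e0.
have : nbhs (f x) (ball (f x) e) by apply: nbhsx_ballx.
move/cf => /nbhs_ballP [r r0 Hr]; exists r => //.
Qed.

Section Frob.
Variables (R : realType) (n d : nat).
Local Notation M := 'M[R]_(n, d).
Local Notation dot := (@frob_dot R n d).
Local Notation nrm := (@frob_norm R n d).

Lemma dotC (A B : M) : dot A B = dot B A.
Proof. by rewrite /frob_dot; apply: eq_bigr => i _; apply: eq_bigr => j _; rewrite mulrC. Qed.

Lemma dotDl (A B C : M) : dot (A + B) C = dot A C + dot B C.
Proof.
rewrite /frob_dot -big_split; apply: eq_bigr => i _; rewrite -big_split.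
by apply: eq_bigr => j _; rewrite !mxE mulrDl.
Qed.

Lemma dotZl k (A B : M) : dot (k *: A) B = k * dot A B.
Proof.
rewrite /frob_dot mulr_sumr; apply: eq_bigr => i _; rewrite mulr_sumr.
by apply: eq_bigr => j _; rewrite !mxE mulrA.
Qed.

Lemma dotNl (A B : M) : dot (- A) B = - dot A B.
Proof. by rewrite -scaleN1r dotZl mulN1r. Qed.

Lemma dotBl (A B C : M) : dot (A - B) C = dot A C - dot B C.
Proof. by rewrite dotDl dotNl. Qed.

Lemma dotDr (A B C : M) : dot C (A + B) = dot C A + dot C B.
Proof. by rewrite dotC dotDl !(dotC C). Qed.

Lemma dotZr k (A B : M) : dot B (k *: A) = k * dot B A.
Proof. by rewrite dotC dotZl dotC. Qed.

Lemma dotNr (A B : M) : dot B (- A) = - dot B A.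
Proof. by rewrite dotC dotNl dotC. Qed.

Lemma dotBr (A B C : M) : dot C (A - B) = dot C A - dot C B.
Proof. by rewrite dotDr dotNr. Qed.

Lemma dot0l (A : M) : dot 0 A = 0.
Proof. by rewrite -(scale0r (0 : M)) dotZl mul0r. Qed.

Lemma dot0r (A : M) : dot A 0 = 0.
Proof. by rewrite dotC dot0l. Qed.

Lemma dot_ge0 (A : M) : 0 <= dot A A.
Proof. by apply: sumr_ge0 => i _; apply: sumr_ge0 => j _; rewrite -expr2 sqr_ge0. Qed.

Lemma entry_le_dot (A : M) i j : A i j ^+ 2 <= dot A A.
Proof.
rewrite /frob_dot (bigD1 i) //= (bigD1 j) //= -expr2 -addrA lerDl.
apply: addr_ge0; first by apply: sumr_ge0 => k _; rewrite -expr2 sqr_ge0.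
by apply: sumr_ge0 => k _; apply: sumr_ge0 => l _; rewrite -expr2 sqr_ge0.
Qed.

Lemma dot_eq0 (A : M) : dot A A = 0 -> A = 0.
Proof.
move=> h; apply/matrixP => i j; rewrite mxE.
have := entry_le_dot A i j; rewrite h => h2.
have : A i j ^+ 2 = 0 by apply/eqP; rewrite eq_le h2 sqr_ge0.
by move/eqP; rewrite sqrf_eq0 => /eqP.
Qed.

Lemma nrm_ge0 (A : M) : 0 <= nrm A.
Proof. exact: sqrtr_ge0. Qed.

Lemma nrm2 (A : M) : nrm A ^+ 2 = dot A A.
Proof. by rewrite /frob_norm sqr_sqrtr // dot_ge0. Qed.

Lemma nrm_eq0 (A : M) : (nrm A == 0) = (A == 0).
Proof.
apply/idP/idP => [/eqP h|/eqP ->].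
  by apply/eqP/dot_eq0; rewrite -nrm2 h expr0n.
by rewrite /frob_norm dot0l sqrtr0.
Qed.

Lemma nrm0 : nrm 0 = 0.
Proof. by apply/eqP; rewrite nrm_eq0. Qed.

Lemma nrm_gt0 (A : M) : A != 0 -> 0 < nrm A.
Proof. by move=> h; rewrite lt_def nrm_eq0 h nrm_ge0. Qed.

Lemma nrmZ k (A : M) : nrm (k *: A) = `|k| * nrm A.
Proof.
by rewrite /frob_norm dotZl dotZr mulrA -expr2 sqrtrM ?sqr_ge0 // sqrtr_sqr.
Qed.

Lemma nrmN (A : M) : nrm (- A) = nrm A.
Proof. by rewrite -scaleN1r nrmZ normrN1 mul1r. Qed.

Lemma nrmB (A B : M) : nrm (A - B) = nrm (B - A).
Proof. by rewrite -nrmN opprB. Qed.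

Lemma entry_le_nrm (A : M) i j : `|A i j| <= nrm A.
Proof.
rewrite -(ler_pXn2r (isT : (0 < 2)%N)) ?nnegrE ?nrm_ge0 //.
by rewrite real_normK ?num_real // nrm2 entry_le_dot.
Qed.

Lemma CS (A B : M) : dot A B <= nrm A * nrm B.
Proof.
have [B0|Bn0] := eqVneq B 0; first by rewrite B0 dot0r nrm0 mulr0.
have [c0|c0] := lerP (dot A B) 0.
  by apply: le_trans c0 _; rewrite mulr_ge0 ?nrm_ge0.
have b0 : 0 < dot B B by rewrite -nrm2 exprn_gt0 // nrm_gt0.
set t := - (dot A B / dot B B).
have h : 0 <= dot A A + 2 * t * dot A B + t ^+ 2 * dot B B.
  have := dot_ge0 (A + t *: B).
  rewrite dotDl !dotDr !dotZl !dotZr (dotC B A).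
  by have -> : forall a b c : R, a + t * b + (t * b + t * (t * c)) = a + 2 * t * b + t ^+ 2 * c
    by move=> a b c; ring.
have key : dot A B ^+ 2 <= dot A A * dot B B.
  have e : dot B B * (dot A A + 2 * t * dot A B + t ^+ 2 * dot B B)
           = dot A A * dot B B - dot A B ^+ 2.
    by rewrite /t; field; rewrite gt_eqF.
  by rewrite -subr_ge0 -e mulr_ge0 // ltW.
rewrite -(ler_pXn2r (isT : (0 < 2)%N)) ?nnegrE ?mulr_ge0 ?nrm_ge0 ?(ltW c0) //.
by rewrite exprMn !nrm2.
Qed.

Lemma CSabs (A B : M) : `|dot A B| <= nrm A * nrm B.
Proof.
rewrite ler_norml CS andbT lerNl -dotNl; apply: le_trans (CS _ _) _.
by rewrite nrmN.
Qed.

Lemma nrmD (A B : M) : nrm (A + B) <= nrm A + nrm B.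
Proof.
rewrite -(ler_pXn2r (isT : (0 < 2)%N)) ?nnegrE ?addr_ge0 ?nrm_ge0 //.
rewrite nrm2 dotDl !dotDr (dotC B A) sqrrD !nrm2.
have := CS A B; lra.
Qed.

Lemma nrm_sub_ge (A B : M) : nrm A - nrm B <= nrm (A - B).
Proof. have := nrmD (A - B) B; rewrite subrK; lra. Qed.

Lemma nrm_small (A : M) r : 0 <= r -> (forall i j, `|A i j| <= r) ->
  nrm A <= Num.sqrt ((n * d)%:R) * r.
Proof.
move=> r0 h; rewrite /frob_norm.
have -> : Num.sqrt ((n * d)%:R) * r = Num.sqrt ((n * d)%:R * r ^+ 2).
  by rewrite sqrtrM ?ler0n // sqrtr_sqr ger0_norm.
rewrite ler_sqrt; last by rewrite mulr_ge0 ?ler0n ?sqr_ge0.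
have -> : ((n * d)%:R * r ^+ 2 : R) = \sum_(i < n) \sum_(j < d) r ^+ 2.
  transitivity (\sum_(i < n) (d%:R * r ^+ 2) : R).
    by rewrite sumr_const card_ord -[RHS]mulr_natl natrM mulrA.
  by apply: eq_bigr => i _; rewrite sumr_const card_ord -[RHS]mulr_natl.
apply: ler_sum => i _; apply: ler_sum => j _.
have := h i j; rewrite ler_norml => /andP[h1 h2]; nra.
Qed.

End Frob.


Section Shift.
Variable R : realType.
Implicit Types q e a b s t : R.

Lemma powR_cont (r x : R) : 0 < x -> {for x, continuous (fun y : R => y `^ r)}.
Proof.
move=> x0; apply: differentiable_continuous; apply/derivable1_diffP.
by apply: derivable_powR; rewrite in_itv /= andbT.
Qed.

Definition G q b s := (b + s) `^ (q - 2) * s.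

Lemma G_cont q b s : 0 < b + s -> {for s, continuous (G q b)}.
Proof.
move=> bs; apply: continuousM; last exact: cvg_id.
apply: (@continuous_comp _ _ _ (fun s => b + s) (fun y => y `^ (q - 2))).
  by apply: cvgD; [exact: cvg_cst | exact: cvg_id].
exact: powR_cont.
Qed.

Lemma G_split q b s : 0 < b + s -> G q b s = (b + s) `^ (q - 1) * (s / (b + s)).
Proof.
move=> bs; rewrite /G.
have -> : q - 2 = (q - 1) - 1 by ring.
rewrite powRB ?powRr1 ?ltW //; last by apply/implyP => _; rewrite gt_eqF.
by rewrite mulrAC mulrA.
Qed.

Lemma G_ge0 q b s : 0 <= s -> 0 <= G q b s.
Proof. by move=> s0; rewrite /G mulr_ge0 // powR_ge0. Qed.

Lemma G_mono q b s1 s2 : 1 < q -> 0 < b -> 0 <= s1 -> s1 <= s2 -> G q b s1 <= G q b s2.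
Proof.
move=> q1 b0 s10 s12.
have b1 : 0 < b + s1 by lra.
have b2 : 0 < b + s2 by lra.
rewrite !G_split //; apply: ler_pM.
- exact: powR_ge0.
- by rewrite divr_ge0 // ltW.
- by apply: ge0_ler_powR; rewrite ?nnegrE; lra.
- rewrite ler_pdivrMr // mulrAC ler_pdivlMr //; nra.
Qed.

Definition kq q : R := (2^-1) `^ (q - 1) / 2.

Lemma kq_gt0 q : 0 < kq q.
Proof. by rewrite /kq divr_gt0 // powR_gt0. Qed.

Lemma G_half q b t : 1 < q -> 0 < b -> 0 <= t -> kq q * G q b t <= G q b (t / 2).
Proof.
move=> q1 b0 t0.
have bt : 0 < b + t by lra.
have bt2 : 0 < b + t / 2 by lra.
rewrite !G_split // /kq.
have h1 : (2^-1) `^ (q - 1) * (b + t) `^ (q - 1) <= (b + t / 2) `^ (q - 1).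
  rewrite -powRM; last by lra. 2: by rewrite invr_ge0.
  by apply: ge0_ler_powR; rewrite ?nnegrE; lra.
have h2 : t / (b + t) / 2 <= t / 2 / (b + t / 2).
  rewrite mulrAC ler_pdivrMr // mulrAC ler_pdivlMr //; nra.
have h3 : 0 <= t / (b + t) / 2 by rewrite !divr_ge0 // ?ltW.
set A := 2^-1 `^ (q - 1) * (b + t) `^ (q - 1).
set B := (b + t / 2) `^ (q - 1).
have H := ler_pM (mulr_ge0 (powR_ge0 _ _) (powR_ge0 _ _)) h3 h1 h2.
move: H; rewrite /A /B; lra.
Qed.

Local Notation mu := (@lebesgue_measure R).

Lemma G_int q b u v : 0 < b -> 0 <= u ->
  mu.-integrable `[u, v] (EFin \o G q b).
Proof.
move=> b0 u0; apply: continuous_compact_integrable; first exact: segment_compact.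
apply: continuous_in_subspaceT => x; rewrite inE /= in_itv /= => /andP[ux _].
by apply: G_cont; lra.
Qed.

Lemma cst_int (c u v : R) : mu.-integrable `[u, v] (EFin \o (fun=> c)).
Proof.
apply: continuous_compact_integrable; first exact: segment_compact.
by apply: continuous_subspaceT => x; exact: cvg_cst.
Qed.

Lemma mu_itv u v : u <= v -> fine (mu `[u, v]) = v - u.
Proof.
move=> uv; rewrite lebesgue_measure_itv /= lte_fin.
have [uv'|vu] := ltP u v; first by [].
have -> : v = u by apply/eqP; rewrite eq_le uv vu.
by rewrite subrr.
Qed.

Lemma shifted_G q e a t : 0 < a -> 
  shifted (phi_d q e) a t = \int[mu]_(s in `[0, t]) G q (e + a) s.
Proof.
move=> a0; apply: eq_Rintegral => s; rewrite inE /= in_itv /= => /andP[s0 _].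
have h : a + s != 0 by rewrite gt_eqF //; lra.
by rewrite /phi_d /G addrA; field.
Qed.

Lemma shifted_d_G q e a t : 0 < a -> 0 <= t ->
  shifted_d (phi_d q e) a t = G q (e + a) t.
Proof.
move=> a0 t0; have h : a + t != 0 by rewrite gt_eqF //; lra.
by rewrite /shifted_d /phi_d /G addrA; field.
Qed.

Lemma shifted_ub q e a t : 1 < q -> 0 <= e -> 0 < a -> 0 <= t ->
  shifted (phi_d q e) a t <= t * G q (e + a) t.
Proof.
move=> q1 e0 a0 t0; rewrite shifted_G //.
apply: le_trans (_ : \int[mu]_(s in `[0, t]) G q (e + a) t <= _).
  apply: le_Rintegral => //; [apply: G_int => //; lra | exact: cst_int |].
  move=> s; rewrite /= in_itv /= => /andP[s0 st]; apply: G_mono => //; lra.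
by rewrite Rintegral_cst // mu_itv // subr0 mulrC.
Qed.

Lemma shifted_lb q e a t : 1 < q -> 0 <= e -> 0 < a -> 0 <= t ->
  kq q / 2 * (t * G q (e + a) t) <= shifted (phi_d q e) a t.
Proof.
move=> q1 e0 a0 t0; rewrite shifted_G //.
have ea : 0 < e + a by lra.
have t2 : t / 2 <= t by lra.
have -> : `[0, t]%classic = `[0, t / 2[%classic `|` `[t / 2, t]%classic :> set R.
  rewrite -itv_bndbnd_setU //= bnd_simp; lra.
rewrite Rintegral_setU //; last 2 first.
- rewrite -itv_bndbnd_setU /= ?bnd_simp; last 2 first; [lra|lra|].
  exact: G_int.
- apply/disj_setPS => s [/=]; rewrite !in_itv /= => /andP[_ h1] /andP[h2 _]; lra.
have h0 : 0 <= \int[mu]_(s in `[0, t / 2[) G q (e + a) s.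
  by apply: Rintegral_ge0 => s; rewrite /= in_itv /= => /andP[s0 _]; exact: G_ge0.
rewrite -[X in X <= _]add0r; apply: lerD; first exact: h0.
apply: le_trans (_ : \int[mu]_(s in `[t / 2, t]) G q (e + a) (t / 2) <= _); last first.
  apply: le_Rintegral => //; [exact: cst_int | apply: G_int => //; lra |].
  move=> s; rewrite /= in_itv /= => /andP[s0 st]; apply: G_mono => //; lra.
rewrite Rintegral_cst // mu_itv //.
have := @G_half q (e + a) t q1 ea t0; have := kq_gt0 q.
have : 0 <= G q (e + a) t by exact: G_ge0.
nra.
Qed.

End Shift.


Section Pow.
Variable R : realType.
Implicit Types x y r : R.

Lemma powR_le x y r : 0 <= x -> x <= y -> 0 <= r -> x `^ r <= y `^ r.
Proof. by move=> x0 xy r0; apply: ge0_ler_powR; rewrite // nnegrE //; lra. Qed.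

Lemma powR_anti x y r : 0 < x -> x <= y -> r <= 0 -> y `^ r <= x `^ r.
Proof.
move=> x0 xy r0.
have [s -> s0] : exists2 s, r = - s & 0 <= s by exists (- r); rewrite ?opprK; lra.
rewrite !powRN lef_pV2 ?posrE ?powR_gt0 //; try lra.
by apply: powR_le; lra.
Qed.

Lemma G_gt0 (q b t : R) : 0 < b + t -> 0 < t -> 0 < G q b t.
Proof. by move=> bt t0; rewrite /G mulr_gt0 // powR_gt0. Qed.

End Pow.

Section Main.
Variables (R : realType) (n d : nat).
Local Notation M := 'M[R]_(n, d).
Local Notation dot := (@frob_dot R n d).
Local Notation nrm := (@frob_norm R n d).

Definition NS (q e : R) (T : M -> M) := exists c C : R, 0 < c /\ 0 < C /\
  forall P Q : M, Q != 0 ->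
    c * (nrm (Q - P) * G q (e + nrm Q) (nrm (Q - P))) <= dot (T Q - T P) (Q - P) /\
    nrm (T Q - T P) <= C * G q (e + nrm Q) (nrm (Q - P)).

Lemma struct_NS (q e : R) (T : M -> M) : 1 < q -> 0 <= e -> has_structure q e T -> NS q e T.
Proof.
move=> q1 e0 [_ [_ [C0 [C1 [C00 [C10 H]]]]]].
exists (C0 * (kq q / 2)), C1; split; first by rewrite mulr_gt0 // divr_gt0 // kq_gt0.
split => // P Q Q0; have [h1 h2] := H P Q Q0.
have nQ := nrm_gt0 Q0; have t0 := nrm_ge0 (Q - P).
split.
  apply: le_trans h1; rewrite -mulrA ler_pM2l //.
  exact: shifted_lb.
by rewrite -shifted_d_G.
Qed.

Lemma NS_struct (q e : R) (T : M -> M) : 1 < q -> 0 <= e -> continuous T -> T 0 = 0 -> NS q e T ->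
  has_structure q e T.
Proof.
move=> q1 e0 cT T0 [c [C [c0 [C0 H]]]].
split => //; split => //; exists c, C; do 2 split => //.
move=> P Q Q0; have [h1 h2] := H P Q Q0.
have nQ := nrm_gt0 Q0; have t0 := nrm_ge0 (Q - P).
split; last by rewrite shifted_d_G.
apply: le_trans h1; rewrite ler_pM2l //; exact: shifted_ub.
Qed.

Lemma NS_neq (q e : R) (T : M -> M) (P Q : M) : 1 < q -> 0 <= e -> NS q e T -> Q != 0 -> Q != P -> T Q != T P.
Proof.
move=> q1 e0 [c [C [c0 [C0 H]]]] Q0 QP; have [h1 _] := H P Q Q0.
apply/negP => /eqP TQP; move: h1; rewrite TQP subrr dot0l.
have nQ := nrm_gt0 Q0.
have tp : 0 < nrm (Q - P) by rewrite nrm_gt0 // subr_eq0.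
have := @G_gt0 R q (e + nrm Q) (nrm (Q - P)).
have : 0 < c * (nrm (Q - P) * G q (e + nrm Q) (nrm (Q - P))).
  by rewrite mulr_gt0 // mulr_gt0 // G_gt0 //; lra.
lra.
Qed.

Lemma NS_inj (q e : R) (T : M -> M) : 1 < q -> 0 <= e -> NS q e T -> injective T.
Proof.
move=> q1 e0 HT a b Tab; apply/eqP; apply: contraT => ab; have ba : b != a by rewrite eq_sym.
have [a0|a0] := eqVneq a 0.
  have b0 : b != 0 by rewrite -a0 eq_sym.
  by move: (NS_neq q1 e0 HT b0 ba); rewrite -Tab eqxx.
by move: (NS_neq q1 e0 HT a0 ab); rewrite Tab eqxx.
Qed.

End Main.


Section Small.
Variable R : realType.

Lemma powR_inv_pow (K r : R) : 0 <= K -> 0 < r -> (K `^ r^-1) `^ r = K.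
Proof.
move=> K0 r0; rewrite -powRrM mulVf ?gt_eqF // powRr1 //.
Qed.

Lemma small_G (q B0 eta : R) : 1 < q -> 0 <= B0 -> 0 < eta ->
  exists2 rho, 0 < rho & forall b s, 0 <= b -> b <= B0 -> 0 <= s -> s < rho ->
    G q b s < eta.
Proof.
move=> q1 B00 eta0.
have [q2|q2] := leP 2 q.
  set K := (B0 + 1) `^ (q - 2).
  have K0 : 0 < K by rewrite powR_gt0 //; lra.
  exists (minr 1 (eta / K)); first by rewrite lt_min ltr01 divr_gt0.
  move=> b s b0 bB s0; rewrite lt_min => /andP[s1 sK].
  apply: le_lt_trans (_ : K * s < eta); last by rewrite -ltr_pdivlMl // mulrC.
  rewrite /G mulrC [K * _]mulrC ler_wpM2l //.
  by apply: powR_le; lra.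
set rho := eta `^ (q - 1)^-1.
have rho0 : 0 < rho by rewrite powR_gt0.
exists (minr 1 rho); first by rewrite lt_min ltr01.
move=> b s b0 bB s0; rewrite lt_min => /andP[s1 sr].
have [->|sp] := eqVneq s 0; first by rewrite /G mulr0.
have sp' : 0 < s by rewrite lt_def sp.
apply: le_lt_trans (_ : s `^ (q - 1) < eta).
  rewrite /G -(@mulr_powRB1 _ s (q - 1)); [|lra|lra].
  have -> : q - 1 - 1 = q - 2 by ring.
  rewrite mulrC ler_wpM2l //; apply: powR_anti => //; lra.
rewrite -[X in _ < X](@powR_inv_pow eta (q - 1)); [|lra|lra].
apply: gt0_ltr_powR; rewrite ?nnegrE; [lra|lra|exact: powR_ge0|exact: sr].
Qed.

End Small.

Section Compact.
Variables (R : realType) (n d : nat).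
Local Notation M := 'M[R]_(n, d).
Local Notation dot := (@frob_dot R n d).
Local Notation nrm := (@frob_norm R n d).

Lemma vec_entry (v : 'rV[R]_(n * d)) i j : vec_mx v i j = v 0 (mxvec_index i j).
Proof. by rewrite -mxvecE vec_mxK. Qed.

Lemma vec_mx_cont : continuous (@vec_mx R n d).
Proof.
apply: ball_cont => v e e0; exists e => // w [_ H]; split => // i j.
by rewrite !vec_entry; exact: H.
Qed.

Definition box (r : R) := [set x : M | forall i j, `|x i j| <= r].

Lemma box_compact r : compact (box r).
Proof.
have -> : box r = vec_mx @` [set v : 'rV[R]_(n * d) | forall k, `[- r, r]%classic (v 0 k)].
  apply/seteqP; split => x.
    move=> hx; exists (mxvec x); last by rewrite mxvecK.
    move=> k; case/mxvec_indexP: k => i j; rewrite mxvecE /= in_itv /=.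
    by rewrite -ler_norml; exact: hx.
  move=> [v hv <-] i j; rewrite vec_entry ler_norml.
  by have := hv (mxvec_index i j); rewrite /= in_itv.
apply: (@continuous_compact _ _ (@vec_mx R n d)); first exact: continuous_subspaceT vec_mx_cont.
exact: (@rV_compact _ (n * d) (fun=> `[- r, r]%classic) (fun=> @segment_compact R _ _)).
Qed.

Lemma nrm_cont (S : M -> M) (y : M) : continuous S -> continuous (fun x => nrm (S x - y)).
Proof.
move=> cS; apply: ball_cont => x e e0.
set N := Num.sqrt ((n * d)%:R : R).
have N0 : 0 <= N by exact: sqrtr_ge0.
have e1 : 0 < e / (N + 1) by rewrite divr_gt0 //; lra.
have [r r0 Hr] := cont_ball x (cS) e1.
exists r => // z /Hr [_ Hz]; rewrite /ball /=.
apply: (@le_lt_trans _ _ (nrm (S x - S z))).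
  rewrite ler_norml; have := nrm_sub_ge (S x - y) (S z - y).
  have := nrm_sub_ge (S z - y) (S x - y).
  have -> : S x - y - (S z - y) = S x - S z by rewrite opprB addrA subrK.
  have -> : S z - y - (S x - y) = S z - S x by rewrite opprB addrA subrK.
  rewrite (nrmB (S z) (S x)); lra.
apply: (le_lt_trans (nrm_small (ltW e1) _)).
  by move=> i j; rewrite !mxE; apply: ltW; have := Hz i j; rewrite /ball /=.
rewrite mulrC mulrAC ltr_pdivrMr; last lra.
rewrite -/N ltr_pM2l //; lra.
Qed.

Lemma nrm_sub_sq (A B : M) : nrm (A - B) ^+ 2 = nrm A ^+ 2 - 2 * dot A B + nrm B ^+ 2.
Proof. by rewrite !nrm2 dotBl !dotBr (dotC B A); ring. Qed.

End Compact.

Section Surj.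
Variables (R : realType) (n d : nat).
Local Notation M := 'M[R]_(n, d).
Local Notation dot := (@frob_dot R n d).
Local Notation nrm := (@frob_norm R n d).

Lemma NS_surj (p dl : R) (S : M -> M) : 1 < p -> 0 <= dl -> continuous S -> S 0 = 0 ->
  NS p dl S -> forall y, exists x, S x = y.
Proof.
move=> p1 d0 cS S0 [c [C [c0 [C0 H]]]] y.
have p10 : 0 < p - 1 by lra.
set K := 6 * nrm y / c + 1.
have K0 : 0 < K by rewrite /K ltr_pwDr // divr_ge0 ?mulr_ge0 ?nrm_ge0 //; lra.
set r0 := Num.max dl (K `^ (p - 1)^-1).
have r00 : 0 <= r0 by rewrite le_max d0.
have coer : forall x, r0 < nrm x -> nrm y < nrm (S x - y).
  move=> x hx.
  have x0 : x != 0 by apply/eqP => x0; move: hx; rewrite x0 nrm0; lra.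
  have [h1 _] := H 0 x x0; rewrite S0 !subr0 in h1.
  have cs := CS (S x) x.
  have nx := nrm_gt0 x0.
  have hG : c * G p (dl + nrm x) (nrm x) <= nrm (S x).
    rewrite -(ler_pM2r nx); apply: le_trans cs; apply: le_trans h1 => /=.
    by rewrite mulrA [c * _ * _]mulrAC mulrC !mulrA.
  have hx1 : dl <= nrm x by apply: ltW; apply: le_lt_trans hx; rewrite le_max lexx.
  have hx2 : K < nrm x `^ (p - 1).
    rewrite -[X in X < _](@powR_inv_pow _ K (p - 1)) ?(ltW K0) //.
    apply: gt0_ltr_powR; rewrite ?nnegrE ?powR_ge0 ?nrm_ge0 //.
    by apply: le_lt_trans hx; rewrite le_max lexx orbT.
  have hG2 : nrm x `^ (p - 1) / 3 <= G p (dl + nrm x) (nrm x).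
    rewrite G_split; last by lra.
    have e1 : nrm x `^ (p - 1) <= (dl + nrm x + nrm x) `^ (p - 1).
      by apply: powR_le; rewrite ?nrm_ge0 //; lra.
    have e2 : 1 / 3 <= nrm x / (dl + nrm x + nrm x).
      by rewrite ler_pdivlMr; lra.
    have e3 := powR_ge0 (nrm x) (p - 1).
    have e4 : (0 : R) <= 1 / 3 by lra.
    have := ler_pM e3 e4 e1 e2; lra.
  have hS : 2 * nrm y < nrm (S x).
    apply: lt_le_trans hG; have : c * K / 3 <= c * G p (dl + nrm x) (nrm x).
      rewrite -mulrA ler_pM2l //; apply: le_trans hG2; rewrite ler_pM2r //; lra.
    have -> : c * K / 3 = 2 * nrm y + c / 3.
      by rewrite /K; field; rewrite gt_eqF.
    have : 0 < c / 3 by rewrite divr_gt0.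
    lra.
  have := nrm_sub_ge (S x) y; lra.
set g := fun x => nrm (S x - y).
have box0 : @box R n d r0 0 by move=> i j; rewrite mxE normr0.
have [x0 x0K hmin] := @compact_EVT_min _ R g (@box R n d r0) (ex_intro _ 0 box0)
  (@box_compact R n d r0) (continuous_subspaceT (nrm_cont (y:=y) cS)).
have g0 : g 0 = nrm y by rewrite /g S0 sub0r nrmN.
have gx0 : g x0 <= nrm y by rewrite -g0; apply: hmin; rewrite inE.
have gmin : forall z, g x0 <= g z.
  move=> z; case: (lerP (nrm z) r0) => hz.
    by apply: hmin; rewrite inE => i j; apply: le_trans (entry_le_nrm _ _ _) hz.
  by apply: ltW; apply: le_lt_trans gx0 (coer z hz).
exists x0; apply/eqP; apply: contraT => hne.
set v := y - S x0.
have v0 : v != 0 by rewrite subr_eq0 eq_sym.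
have nv := nrm_gt0 v0.
have gv : g x0 = nrm v by rewrite /g nrmB.
set B0 := dl + nrm x0 + nrm v.
have B00 : 0 <= B0 by rewrite /B0 !addr_ge0 ?nrm_ge0.
have eta0 : 0 < 2 * c * nrm v / C ^+ 2 by rewrite divr_gt0 ?mulr_gt0 ?exprn_gt0.
have [rho rho0 Hs] := small_G p1 B00 eta0.
set t := Num.min 1 (rho / (2 * nrm v)).
have t0 : 0 < t by rewrite lt_min ltr01 divr_gt0 ?mulr_gt0.
have t1 : t <= 1 by rewrite ge_min lexx.
have tr : t * nrm v < rho.
  apply: (@le_lt_trans _ _ (rho / (2 * nrm v) * nrm v)).
    by rewrite ler_pM2r // ge_min lexx orbT.
  have nv0 : nrm v != 0 by rewrite gt_eqF.
  have -> : rho / (2 * nrm v) * nrm v = rho / 2 by field.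
  lra.
set x1 := x0 + t *: v.
set D := S x1 - S x0.
set s := t * nrm v.
have s0 : 0 < s by rewrite mulr_gt0.
have nts : nrm (t *: v) = s by rewrite nrmZ gtr0_norm.
have [b [b0 bB [i1 i2]]] : exists b, [/\ 0 <= b, b <= B0,
    c * (s * G p b s) <= t * dot D v & nrm D <= C * G p b s].
  have [x00|x00] := eqVneq x0 0.
    have x1e : x1 = t *: v by rewrite /x1 x00 add0r.
    have x10 : x1 != 0 by rewrite x1e scaler_eq0 negb_or gt_eqF.
    have [h1 h2] := H x0 x1 x10.
    exists (dl + nrm x1); split.
    - by rewrite addr_ge0 ?nrm_ge0.
    - by rewrite /B0 x1e nts x00 nrm0 addr0 lerD2l /s ler_piMl ?nrm_ge0.
    - by move: h1; rewrite -/D x00 subr0 x1e nts dotZr.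
    - by move: h2; rewrite -/D x00 subr0 x1e nts.
  have [h1 h2] := H x1 x0 x00.
  have ex : x0 - x1 = - (t *: v) by rewrite /x1 opprD addrA subrr add0r.
  exists (dl + nrm x0); split.
  - by rewrite addr_ge0 ?nrm_ge0.
  - by rewrite /B0 lerDl nrm_ge0.
  - by move: h1; rewrite ex nrmN nts -opprB -/D dotNl dotNr opprK dotZr.
  - by move: h2; rewrite ex nrmN nts nrmB.
have gam := Hs b s b0 bB (ltW s0) tr.
set gm := G p b s in i1 i2 gam.
have gm0 : 0 < gm by apply: G_gt0 => //; lra.
have i1' : c * nrm v * gm <= dot D v.
  rewrite -(ler_pM2l t0); apply: le_trans i1 => /=; rewrite /s.
  by have -> : t * (c * nrm v * gm) = c * (t * nrm v * gm) by ring.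
have nD := nrm_ge0 D.
have i2' : nrm D ^+ 2 <= C ^+ 2 * gm ^+ 2.
  by rewrite -exprMn; nra.
have gam' : C ^+ 2 * gm < 2 * c * nrm v.
  by rewrite mulrC -ltr_pdivlMr ?exprn_gt0.
have E : nrm (S x1 - y) ^+ 2 = nrm D ^+ 2 - 2 * dot D v + nrm v ^+ 2.
  have -> : S x1 - y = D - v by rewrite /D /v opprB addrA subrK.
  exact: nrm_sub_sq.
have lt2 : nrm (S x1 - y) ^+ 2 < nrm v ^+ 2.
  rewrite E; have : C ^+ 2 * gm ^+ 2 < 2 * c * nrm v * gm.
    by rewrite expr2 mulrA ltr_pM2r.
  lra.
have : g x1 < g x0.
  rewrite gv /g -(ltr_pXn2r (isT : (0 < 2)%N)) ?nnegrE ?nrm_ge0 //.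
have := gmin x1; lra.
Qed.

End Surj.


Section Real.
Variable R : realType.

Lemma pow_bounds (e k1 k2 : R) : 0 < k1 -> 0 < k2 ->
  exists lo hi : R, [/\ 0 < lo, 0 < hi & forall x y, 0 < y -> k1 * y <= x -> x <= k2 * y ->
    lo * y `^ e <= x `^ e /\ x `^ e <= hi * y `^ e].
Proof.
move=> k10 k20.
have [e0|e0] := leP 0 e.
  exists (k1 `^ e), (k2 `^ e); split; rewrite ?powR_gt0 // => x y y0 h1 h2.
  rewrite -!powRM; try lra.
  have ky : 0 < k1 * y by rewrite mulr_gt0.
  split; apply: powR_le => //; lra.
exists (k2 `^ e), (k1 `^ e); split; rewrite ?powR_gt0 // => x y y0 h1 h2.
rewrite -!powRM; try lra.
have ky : 0 < k1 * y by rewrite mulr_gt0.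
split; apply: powR_anti => //; lra.
Qed.

Lemma inv_bounds (p dl c C : R) : 1 < p -> 0 <= dl -> 0 < c -> 0 < C ->
  exists k1 k2 : R, [/\ 0 < k1, 0 < k2 & forall na t s nA, 0 < na -> 0 <= t -> 0 <= s ->
   c * G p (dl + na) na <= nA -> nA <= C * G p (dl + na) na ->
   c * G p (dl + na) t <= s -> s <= C * G p (dl + na) t ->
   k1 * (dl + na + t) `^ (p - 1) <= dl `^ (p - 1) + nA + s /\
   dl `^ (p - 1) + nA + s <= k2 * (dl + na + t) `^ (p - 1)].
Proof.
move=> p1 d0 c0 C0.
set ka := (3^-1 : R) `^ (p - 1).
have ka0 : 0 < ka by rewrite powR_gt0.
have ka1 : ka <= 1.
  have -> : (1 : R) = 1 `^ (p - 1) by rewrite powR1.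
  by apply: powR_le; rewrite ?invr_ge0 //; lra.
set tw := (2 : R) `^ (p - 1).
have tw0 : 0 < tw by rewrite powR_gt0.
exists (minr 1 c * ka / 6), (1 + C * tw + C); split.
- by rewrite divr_gt0 // mulr_gt0 // lt_min ltr01.
- by have := mulr_gt0 C0 tw0; lra.
move=> na t s nA na0 t0 s0 h1 h2 h3 h4.
set b := dl + na.
set m := b + t.
have b0 : 0 < b by rewrite /b; lra.
have m0 : 0 < m by rewrite /m; lra.
have Gna := @G_split R p b na (ltac:(lra)).
have Gt := @G_split R p b t (ltac:(lra)).
rewrite -/m in Gt.
set P := m `^ (p - 1).
have P0 : 0 < P by rewrite powR_gt0.
have dlP : dl `^ (p - 1) <= P by apply: powR_le; rewrite /m /b; lra.
have dlP0 : 0 <= dl `^ (p - 1) by apply: powR_ge0.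
have nA0 : 0 <= nA.
  apply: le_trans h1; apply: mulr_ge0; [lra | apply: G_ge0; lra].
have bn_le : (b + na) `^ (p - 1) <= tw * P.
  rewrite /tw /P -powRM; try lra.
  by apply: powR_le; rewrite /m /b; lra.
have fr1 : na / (b + na) <= 1 by rewrite ler_pdivrMr; lra.
have fr1' : 0 <= na / (b + na) by rewrite divr_ge0; lra.
have ft1 : t / m <= 1 by rewrite ler_pdivrMr // /m; lra.
have ft1' : 0 <= t / m by rewrite divr_ge0; lra.
have bnp : 0 <= (b + na) `^ (p - 1) by apply: powR_ge0.
split; last first.
  have u1 : nA <= C * (tw * P).
    apply: (le_trans h2); rewrite ler_pM2l // Gna.
    by apply: le_trans bn_le; rewrite -[X in _ <= X]mulr1 ler_pM.
  have u2 : s <= C * P.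
    apply: (le_trans h4); rewrite ler_pM2l // Gt.
    by rewrite -[X in _ <= X]mulr1 ler_pM // ltW.
  have e1 : (1 + C * tw + C) * P = P + C * (tw * P) + C * P by ring.
  rewrite e1; lra.
have mk : (m / 3) `^ (p - 1) = ka * P by rewrite /ka /P -powRM; try lra; rewrite mulrC.
have kmin : minr 1 c <= 1 by rewrite ge_min lexx.
have kminc : minr 1 c <= c by rewrite ge_min lexx orbT.
have kmin0 : 0 < minr 1 c by rewrite lt_min ltr01.
have [hd|hd] := leP (m / 3) dl.
  have : ka * P <= dl `^ (p - 1) by rewrite -mk; apply: powR_le; lra.
  have : minr 1 c * ka / 6 * P <= ka * P.
    rewrite ler_pM2r // ler_pdivrMr //.
    have : minr 1 c * ka <= 1 * ka by rewrite ler_wpM2r // ltW.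
    lra.
  lra.
have [hn|hn] := leP (m / 3) na.
  have i1 : ka * P <= (b + na) `^ (p - 1) by rewrite -mk; apply: powR_le; rewrite /b; lra.
  have i2 : 1 / 6 <= na / (b + na) by rewrite ler_pdivlMr /b /m; lra.
  have i3 : c * (ka * P * (1 / 6)) <= nA.
    apply: le_trans h1; rewrite ler_pM2l // Gna.
    apply: ler_pM; [by rewrite mulr_ge0 // ltW | lra | exact: i1 | exact: i2].
  have : minr 1 c * ka / 6 * P <= c * (ka * P * (1 / 6)).
    have -> : minr 1 c * ka / 6 * P = minr 1 c * (ka * P * (1 / 6)) by ring.
    by rewrite ler_pM2r // mulr_gt0 // mulr_gt0.
  lra.
have ht : m / 3 <= t by rewrite /m /b in hd hn *; lra.
have i2 : 1 / 3 <= t / m by rewrite ler_pdivlMr; lra.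
have i3 : c * (P * (1 / 3)) <= s.
  apply: le_trans h3; rewrite ler_pM2l // Gt; apply: ler_pM => //; lra.
have : minr 1 c * ka / 6 * P <= c * (P * (1 / 3)).
  have h5 : minr 1 c * ka <= c.
    apply: le_trans kminc; rewrite -[X in _ <= X]mulr1; apply: ler_wpM2l; [exact: ltW | exact: ka1].
  have : minr 1 c * ka * P <= c * P by apply: ler_wpM2r; [exact: ltW | exact: h5].
  have : 0 <= c * P by rewrite mulr_ge0 // ltW.
  lra.
lra.
Qed.

End Real.



Lemma le_eq (R : realType) (x y : R) : x = y -> x <= y.
Proof. by move=> ->. Qed.

Section Mat.
Variables (R : realType) (n d : nat).
Local Notation M := 'M[R]_(n, d).
Local Notation dot := (@frob_dot R n d).
Local Notation nrm := (@frob_norm R n d).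

Lemma NS_cont (q e : R) (T : M -> M) : 1 < q -> 0 <= e -> T 0 = 0 -> NS q e T -> continuous T.
Proof.
move=> q1 e0 T0 [c [C [c0 [C0 H]]]].
apply: ball_cont => X eps eps0.
set B0 := e + nrm X + 1.
have B00 : 0 <= B0 by rewrite /B0 !addr_ge0 ?nrm_ge0.
have eta0 : 0 < eps / C by rewrite divr_gt0.
have [rho rho0 Hs] := small_G q1 B00 eta0.
set N := Num.sqrt ((n * d)%:R : R).
have N0 : 0 <= N by exact: sqrtr_ge0.
set r1 := minr rho 1.
have r10 : 0 < r1 by rewrite lt_min rho0 ltr01.
have r0 : 0 < r1 / (N + 1) by rewrite divr_gt0 //; lra.
exists (r1 / (N + 1)) => // Y [_ HY].
have hs : nrm (X - Y) < r1.
  apply: (le_lt_trans (nrm_small (ltW r0) _)).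
    by move=> i j; rewrite !mxE; apply: ltW; have := HY i j; rewrite /ball /=.
  rewrite mulrC mulrAC ltr_pdivrMr; last lra.
  rewrite -/N ltr_pM2l //; lra.
have hr1 : r1 <= rho by rewrite ge_min lexx.
have hr2 : r1 <= 1 by rewrite ge_min lexx orbT.
suff hT : nrm (T X - T Y) < eps.
  split => // i j; rewrite /ball /=; apply: le_lt_trans hT.
  by have := entry_le_nrm (T X - T Y) i j; rewrite !mxE.
have Ceta : C * (eps / C) = eps by rewrite mulrC -mulrA mulVf ?gt_eqF // mulr1.
have [X0|X0] := eqVneq X 0.
  have [Y0|Y0] := eqVneq Y 0; first by rewrite X0 Y0 subrr nrm0.
  have [_ h2] := H 0 Y Y0.
  move: h2; rewrite T0 !subr0 => h2.
  rewrite X0 T0 sub0r nrmN.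
  move: hs; rewrite X0 sub0r nrmN => hs.
  apply: le_lt_trans h2 _; rewrite -Ceta ltr_pM2l //.
  apply: Hs; rewrite ?addr_ge0 ?nrm_ge0 //; first by rewrite /B0 X0 nrm0 addr0 lerD2l; lra.
  lra.
have [_ h2] := H Y X X0.
apply: le_lt_trans h2 _; rewrite -Ceta ltr_pM2l //.
apply: Hs; rewrite ?addr_ge0 ?nrm_ge0 //; first by rewrite /B0 lerDl.
lra.
Qed.

Lemma NS_inv (p dl : R) (S Dm : M -> M) : 1 < p -> 0 <= dl -> S 0 = 0 -> NS p dl S ->
  cancel S Dm -> cancel Dm S -> NS (p / (p - 1)) (dl `^ (p - 1)) Dm.
Proof.
move=> p1 d0 S0 [c [C [c0 [C0 H]]]] SD DS.
have [k1 [k2 [k10 k20 Hk]]] := inv_bounds p1 d0 c0 C0.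
set e' := p / (p - 1) - 2.
have [lo [hi [lo0 hi0 Hp]]] := pow_bounds e' k10 k20.
exists (c / C ^+ 2 / hi), (1 / (c * lo)); split.
  by rewrite !divr_gt0 // exprn_gt0.
split; first by rewrite divr_gt0 // mulr_gt0.
move=> P Q Q0.
set a := Dm Q; set b := Dm P.
have Sa : S a = Q by rewrite /a DS.
have Sb : S b = P by rewrite /b DS.
have a0 : a != 0 by apply: contraNneq Q0 => a0; rewrite -Sa a0 S0.
have [h1 h2] := H b a a0; rewrite Sa Sb in h1 h2.
have [h3 h4] := H 0 a a0; rewrite Sa S0 !subr0 in h3 h4.
set t := nrm (a - b) in h1 h2 *.
set s := nrm (Q - P) in h1 h2 *.
set na := nrm a in h1 h2 h3 h4 *.
set nA := nrm Q in h3 h4 *.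
have na0 : 0 < na by exact: nrm_gt0.
have t0 : 0 <= t by exact: nrm_ge0.
have s0 : 0 <= s by exact: nrm_ge0.
have nA0 : 0 <= nA by exact: nrm_ge0.
have hA : c * G p (dl + na) na <= nA.
  rewrite -(ler_pM2r na0); apply: le_trans (CS Q a); apply: le_trans h3.
  by apply: le_eq; ring.
have hs : c * G p (dl + na) t <= s.
  have [t00|tp] := eqVneq t 0; first by rewrite t00 /G !mulr0.
  have tp' : 0 < t by rewrite lt_def tp t0.
  rewrite -(ler_pM2r tp'); apply: le_trans (CS (Q - P) (a - b)); apply: le_trans h1.
  by apply: le_eq; ring.
have [Hk1 Hk2] := Hk na t s nA na0 t0 s0 hA h4 hs h2.
set m := dl + na + t in Hk1 Hk2.
have m0 : 0 < m by rewrite /m; lra.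
set Mm := dl `^ (p - 1) + nA + s in Hk1 Hk2.
have y0 : 0 < m `^ (p - 1) by rewrite powR_gt0.
have [Hp1 Hp2] := Hp Mm (m `^ (p - 1)) y0 Hk1 Hk2.
have ey : (m `^ (p - 1)) `^ e' = m `^ (2 - p).
  rewrite -powRrM; congr (_ `^ _); rewrite /e'; field; rewrite subr_eq0 gt_eqF //.
rewrite ey in Hp1 Hp2.
set Y := m `^ (2 - p) in Hp1 Hp2.
set W := m `^ (p - 2).
have Y0 : 0 < Y by rewrite powR_gt0.
have W0 : 0 < W by rewrite powR_gt0.
have WY : W * Y = 1.
  rewrite /W /Y -powRD; first by rewrite addrC subrKA subrr powRr0.
  by apply/implyP => _; rewrite gt_eqF.
have GW : G p (dl + na) t = W * t by [].
rewrite GW in h1 h2 hs.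
have GD : G (p / (p - 1)) (dl `^ (p - 1) + nA) s = Mm `^ e' * s by [].
rewrite GD -/a -/b.
set Z := Mm `^ e' in Hp1 Hp2 *.
have Z0 : 0 <= Z by exact: powR_ge0.
have et : nrm (a - b) = t by [].
clearbody Z Y W Mm m t s na nA.
split.
  rewrite dotC.
  apply: le_trans h1.
  have s2 : s ^+ 2 <= C ^+ 2 * W ^+ 2 * t ^+ 2.
    have h22 := ler_pM s0 s0 h2 h2.
    by apply: le_trans (le_trans _ h22) _; apply: le_eq; ring.
  have st1 : c / C ^+ 2 / hi * (s * (Z * s)) <= c / C ^+ 2 * Y * s ^+ 2.
    have -> : c / C ^+ 2 / hi * (s * (Z * s)) = c / C ^+ 2 * (Z / hi) * s ^+ 2 by ring.
    apply: ler_wpM2r; first exact: sqr_ge0.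
    apply: ler_wpM2l; first by rewrite divr_ge0 ?exprn_ge0 // ltW.
    by rewrite ler_pdivrMr // mulrC.
  apply: le_trans st1 _.
  have -> : c * (t * (W * t)) = c / C ^+ 2 * Y * (C ^+ 2 * W ^+ 2 * t ^+ 2).
    have C2 : C ^+ 2 != 0 by rewrite gt_eqF // exprn_gt0.
    have -> : c / C ^+ 2 * Y * (C ^+ 2 * W ^+ 2 * t ^+ 2) = c * (W * Y) * W * t ^+ 2.
      by field; rewrite gt_eqF.
    by rewrite WY; ring.
  apply: ler_wpM2l; last exact: s2.
  by rewrite mulr_ge0 ?divr_ge0 ?exprn_ge0 ?ltW.
have ht : c * t <= s * Y.
  have : c * W * t * Y <= s * Y by apply: ler_wpM2r; [exact: ltW | rewrite -mulrA; exact: hs].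
  have -> : c * W * t * Y = c * t * (W * Y) by ring.
  by rewrite WY mulr1.
have hY : Y <= Z / lo by rewrite ler_pdivlMr // mulrC.
have h : c * t <= s * (Z / lo) by apply: le_trans ht _; apply: ler_wpM2l.
rewrite -(ler_pM2l c0).
have -> : c * (1 / (c * lo) * (Z * s)) = s * (Z / lo).
  by field; rewrite !gt_eqF.
exact: h.
Qed.

End Mat.

Unset Implicit Arguments. Set Strict Implicit.

Theorem lemma5p1 (R : realType) (n d : nat) (p delta : R)
    (S : 'M[R]_(n, d) -> 'M[R]_(n, d)) :
  1 < p -> 0 <= delta -> has_structure p delta S ->
  bijective S /\
  exists D : 'M[R]_(n, d) -> 'M[R]_(n, d),
    cancel S D /\ cancel D S /\
    has_structure (p / (p - 1)) (delta `^ (p - 1)) D.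
Proof.
move=> p1 d0 HS.
have [cS [S0 _]] := HS.
have NSS := struct_NS p1 d0 HS.
have inj := NS_inj p1 d0 NSS.
have surj := NS_surj p1 d0 cS S0 NSS.
pose D y := projT1 (cid (surj y)).
have DS : cancel D S by move=> y; rewrite /D; case: (cid (surj y)).
have SD : cancel S D by move=> x; apply: inj; rewrite DS.
split; first by exists D.
exists D; split => //; split => //.
have q1 : 1 < p / (p - 1) by rewrite ltr_pdivlMr; lra.
have e0 : 0 <= delta `^ (p - 1) by apply: powR_ge0.
have D0 : D 0 = 0 by rewrite -{1}S0 SD.
have NSD := NS_inv p1 d0 S0 NSS SD DS.
apply: NS_struct => //.
exact: NS_cont q1 e0 D0 NSD.
Qed.
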